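(* For $\lambda,\mu,\nu\in k$ let $$\mathscr{E}_{\lambda,\mu,\nu}=\left\{\begin{pmatrix}a&0&0&0\\ b&a&0&0\\ c&0&a&0\\ d&\lambda b+\nu c&\nu b+\mu c&a\end{pmatrix}\;\middle|\;a,b,c,d\in k\right\},$$ a commutative $k$-algebra under the usual matrix multiplication. Then $\mathscr{E}_{\lambda,\mu,\nu}$ is a symmetric Frobenius $k$-algebra if and only if $\lambda\mu-\nu^2\neq0$.
   Context: $k$ is an algebraically closed field of characteristic zero. A finite-dimensional $k$-algebra $E$ (concentrated in degree $0$) is Frobenius if $E\cong E^*=\mathrm{Hom}_k(E,k)$ as left $E$-modules, and symmetric Frobenius if $E\cong E^*$ as $E$-bimodules. *)

(* Defs.v *)
From HB Require Import structures.
From mathcomp Require Import all_boot all_order all_algebra.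
Set Implicit Arguments. Unset Strict Implicit. Unset Printing Implicit Defensive.
Import GRing.Theory.
Local Open Scope ring_scope.

Definition Emat (k : fieldType) (l m n a b c d : k) : 'M[k]_4 :=
  \matrix_(i < 4, j < 4)
    match nat_of_ord i, nat_of_ord j with
    | 0%N, 0%N | 1%N, 1%N | 2%N, 2%N | 3%N, 3%N => a
    | 1%N, 0%N => b
    | 2%N, 0%N => c
    | 3%N, 0%N => d
    | 3%N, 1%N => l * b + n * c
    | 3%N, 2%N => n * b + m * c
    | _, _ => 0
    end.

Definition Ealg (k : fieldType) (l m n : k) (M : 'M[k]_4) : Prop :=
  exists a b c d : k, M = Emat l m n a b c d.

Definition lin_on (k : fieldType) (p : nat) (S : 'M[k]_p -> Prop)
  (f : 'M[k]_p -> k) : Prop :=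
  forall (al : k) (x y : 'M[k]_p), S x -> S y -> f (al *: x + y) = al * f x + f y.

(* A finite-dimensional algebra S (a subalgebra of 'M[k]_p) is symmetric
   Frobenius iff S ~= S^* = Hom_k(S,k) as S-bimodules, where the bimodule
   structure on S^* is (a . f . b)(y) = f (b * y * a). *)
Definition symmetric_frobenius (k : fieldType) (p : nat)
  (S : 'M[k]_p -> Prop) : Prop :=
  exists phi : 'M[k]_p -> 'M[k]_p -> k,
    (forall x, S x -> lin_on S (phi x)) /\
    (forall (al : k) x y z, S x -> S y -> S z ->
        phi (al *: x + y) z = al * phi x z + phi y z) /\
    (forall a x b y, S a -> S x -> S b -> S y ->
        phi (a *m x *m b) y = phi x (b *m y *m a)) /\
    (forall x x', S x -> S x' -> (forall y, S y -> phi x y = phi x' y) -> x = x') /\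
    (forall f, lin_on S f -> exists2 x, S x & forall y, S y -> phi x y = f y).

(* Main.v *)
Require Import Defs.
From HB Require Import structures.
From mathcomp Require Import all_boot all_order all_algebra ring.
Import GRing.Theory.
Local Open Scope ring_scope.
Set Implicit Arguments.

Lemma EmatM (k : fieldType) (l m n a b c d a' b' c' d' : k) :
  Emat l m n a b c d *m Emat l m n a' b' c' d' =
  Emat l m n (a*a') (a*b'+b*a') (a*c'+c*a')
    (a*d'+d*a' + l*b*b' + n*(b*c'+c*b') + m*c*c').
Proof.
apply/matrixP => i j; rewrite !mxE !big_ord_recr big_ord0 /= !mxE.
case: i j => [[|[|[|[|i]]]] Hi] [[|[|[|[|j]]]] Hj] //=; ring.
Qed.

Lemma EmatL (k : fieldType) (l m n al a b c d a' b' c' d' : k) :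
  al *: Emat l m n a b c d + Emat l m n a' b' c' d' =
  Emat l m n (al*a+a') (al*b+b') (al*c+c') (al*d+d').
Proof.
apply/matrixP => i j; rewrite !mxE.
case: i j => [[|[|[|[|i]]]] Hi] [[|[|[|[|j]]]] Hj] //=; ring.
Qed.

Lemma Emat_inj (k : fieldType) (l m n a b c d a' b' c' d' : k) :
  Emat l m n a b c d = Emat l m n a' b' c' d' -> [/\ a = a', b = b', c = c' & d = d'].
Proof.
move=> /matrixP H.
have := H 0 0; have := H 1 0; have := H 2 0; have := H 3 0.
by rewrite !mxE /= => -> -> -> ->.
Qed.

Lemma Emat1 (k : fieldType) (l m n : k) : Emat l m n 1 0 0 0 = 1%:M.
Proof.
apply/matrixP => i j; rewrite !mxE.
case: i j => [[|[|[|[|i]]]] Hi] [[|[|[|[|j]]]] Hj] //=; rewrite ?mulr0 ?addr0 //.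
Qed.

Lemma Emat0 (k : fieldType) (l m n : k) : Emat l m n 0 0 0 0 = 0.
Proof.
apply/matrixP => i j; rewrite !mxE.
case: i j => [[|[|[|[|i]]]] Hi] [[|[|[|[|j]]]] Hj] //=; rewrite ?mulr0 ?addr0 //.
Qed.

Lemma EmatC (k : fieldType) (l m n : k) x y :
  Ealg l m n x -> Ealg l m n y -> x *m y = y *m x.
Proof.
move=> [a [b [c [d ->]]]] [a' [b' [c' [d' ->]]]]; rewrite !EmatM.
congr Emat; ring.
Qed.

Lemma EalgM (k : fieldType) (l m n : k) x y :
  Ealg l m n x -> Ealg l m n y -> Ealg l m n (x *m y).
Proof.
move=> [a [b [c [d ->]]]] [a' [b' [c' [d' ->]]]]; rewrite !EmatM.
by do 4 eexists.
Qed.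

Lemma Emat30 (k : fieldType) (l m n a b c d : k) :
  Emat l m n a b c d (3 : 'I_4) (0 : 'I_4) = d.
Proof. by rewrite mxE. Qed.

Lemma lin0 (k : fieldType) (l m n : k) f :
  lin_on (Ealg l m n) f -> f 0 = 0.
Proof.
move=> H; have S0 : Ealg l m n 0 by exists 0, 0, 0, 0; rewrite Emat0.
have := H 1 0 0 S0 S0; rewrite scale1r addr0 mul1r => E.
by apply/(addrI (f 0)); rewrite addr0 -E.
Qed.

Lemma lin_expand (k : fieldType) (l m n : k) f a b c d :
  lin_on (Ealg l m n) f ->
  f (Emat l m n a b c d) = a * f (Emat l m n 1 0 0 0) + b * f (Emat l m n 0 1 0 0)
     + c * f (Emat l m n 0 0 1 0) + d * f (Emat l m n 0 0 0 1).
Proof.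
move=> H.
have SE : forall a b c d, Ealg l m n (Emat l m n a b c d) by move=> *; do 4 eexists.
have E1 : Emat l m n a b c d = a *: Emat l m n 1 0 0 0 + Emat l m n 0 b c d.
  by rewrite EmatL; congr Emat; ring.
have E2 : Emat l m n 0 b c d = b *: Emat l m n 0 1 0 0 + Emat l m n 0 0 c d.
  by rewrite EmatL; congr Emat; ring.
have E3 : Emat l m n 0 0 c d = c *: Emat l m n 0 0 1 0 + Emat l m n 0 0 0 d.
  by rewrite EmatL; congr Emat; ring.
have E4 : Emat l m n 0 0 0 d = d *: Emat l m n 0 0 0 1 + Emat l m n 0 0 0 0.
  by rewrite EmatL; congr Emat; ring.
rewrite E1 H // E2 H // E3 H // E4 H // Emat0 (lin0 H); ring.
Qed.

Lemma solve2 (k : fieldType) (l m n u v : k) : l * m - n ^+ 2 != 0 ->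
  l * u + n * v = 0 -> n * u + m * v = 0 -> u = 0 /\ v = 0.
Proof.
move=> HD H1 H2; split.
  apply: (mulfI HD); rewrite mulr0.
  transitivity (m * (l * u + n * v) - n * (n * u + m * v)); first ring.
  by rewrite H1 H2; ring.
apply: (mulfI HD); rewrite mulr0.
transitivity (l * (n * u + m * v) - n * (l * u + n * v)); first ring.
by rewrite H1 H2; ring.
Qed.

Unset Implicit Arguments.
Theorem lemma4p2 (k : closedFieldType) (char0 : [pchar k] =i pred0)
    (l m n : k) :
  symmetric_frobenius (Ealg l m n) <-> l * m - n ^+ 2 != 0.
Proof.
have SE : forall a b c d, Ealg l m n (Emat l m n a b c d) by move=> *; do 4 eexists.
split.
- move=> [phi [Hlin [_ [Hbim [Hinj _]]]]].
  apply/negP => /eqP HD.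
  have HD' : l * m = n ^+ 2 by apply/eqP; rewrite -subr_eq0 HD.
  set I := Emat l m n 1 0 0 0.
  have SI : Ealg l m n I by apply: SE.
  set t := phi I.
  have Ht : lin_on (Ealg l m n) t by apply: Hlin.
  have Hphi : forall w y, Ealg l m n w -> Ealg l m n y -> phi w y = t (y *m w).
    move=> w y Sw Sy.
    have := Hbim w I I y Sw SI SI Sy.
    have E1 : I = 1%:M by rewrite /I Emat1.
    by rewrite {1 2 4}E1 !mulmx1 mul1mx.
  have Hw : forall p q s, l * p + n * q=0 -> n * p + m * q=0 -> t (Emat l m n 0 p q s) = 0 ->
      [/\ 0 = p, 0 = q & 0 = s].
    move=> p q s H1 H2 H3.
    have : Emat l m n 0 0 0 0 = Emat l m n 0 p q s.
      apply: Hinj => // y [a [b [c [d ->]]]].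
      rewrite !Hphi // !EmatM.
      have -> : Emat l m n (a * 0) (a * p + b * 0) (a * q + c * 0)
          (a * s + d * 0 + l * b * p + n * (b * q + c * p) + m * c * q)
          = a *: Emat l m n 0 p q s + Emat l m n 0 0 0 0.
        rewrite EmatL; congr Emat; [ring|ring|ring|].
        transitivity (a * s + (b * (l * p + n * q) + c * (n * p + m * q))); first ring.
        rewrite H1 H2; ring.
      rewrite Ht // H3 Emat0 (lin0 Ht) mulr0 addr0.
      rewrite !(mulr0, add0r, addr0) Emat0; exact: lin0 Ht.
    by case/Emat_inj.
  have HZ : t (Emat l m n 0 0 0 1) != 0.
    apply/eqP => HZ.
    have E0 : l * 0 + n * 0 = 0 by ring.
    have E0' : n * 0 + m * 0 = 0 by ring.
    have [_ _] := Hw 0 0 1 E0 E0' HZ.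
    by move/eqP; rewrite eq_sym oner_eq0.
  have [p [q [Hpq H1 H2]]] : exists p q, [/\ (p != 0) || (q != 0),
      l * p + n * q=0 & n * p + m * q=0].
    case: (eqVneq n 0) => [n0|nn0].
      case: (eqVneq l 0) => [l0|ln0].
        exists 1, 0; rewrite oner_eq0 n0 l0; split => //; ring.
      exists n, (-l); rewrite oppr_eq0 ln0 orbT; split => //; first ring.
      transitivity (- (l * m - n ^+ 2)); first ring. by rewrite HD oppr0.
    exists n, (-l); rewrite nn0; split => //; first ring.
    transitivity (- (l * m - n ^+ 2)); first ring. by rewrite HD oppr0.
  set s := - t (Emat l m n 0 p q 0) / t (Emat l m n 0 0 0 1).
  have : t (Emat l m n 0 p q s) = 0.
    have -> : Emat l m n 0 p q s = s *: Emat l m n 0 0 0 1 + Emat l m n 0 p q 0.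
      by rewrite EmatL; congr Emat; ring.
    rewrite Ht // /s -mulrA mulVf // mulr1 addNr //.
  move/(Hw p q s H1 H2) => [P Q _].
  by move: Hpq; rewrite -P -Q eqxx.
- move=> HD.
  exists (fun x y => (x *m y) (3 : 'I_4) (0 : 'I_4)).
  split; first by move=> x _ al y z _ _; rewrite mulmxDr -scalemxAr !mxE.
  split; first by move=> al x y z _ _ _; rewrite mulmxDl -scalemxAl !mxE.
  split.
    move=> a x b y Sa Sx Sb Sy.
    have -> : a *m x *m b *m y = x *m b *m y *m a.
      rewrite (EmatC Sa Sx) -!mulmxA; congr (_ *m _).
      by rewrite (EmatC Sa (EalgM Sb Sy)) mulmxA.
    by rewrite !mulmxA.
  split.
    move=> _ _ [a [b [c [d ->]]]] [a' [b' [c' [d' ->]]]] H.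
    have := H _ (SE 1 0 0 0); have := H _ (SE 0 0 0 1);
    have := H _ (SE 0 1 0 0); have := H _ (SE 0 0 1 0).
    rewrite !EmatM !Emat30 => e1 e2 e3 e4.
    have e1' : n * (b - b') + m * (c - c') = 0.
      by move/eqP: e1; rewrite -subr_eq0 => /eqP <-; ring.
    have e2' : l * (b - b') + n * (c - c') = 0.
      by move/eqP: e2; rewrite -subr_eq0 => /eqP <-; ring.
    have [/eqP u /eqP v] := @solve2 _ l m n _ _ HD e2' e1'.
    move: e3 e4 u v; rewrite !(mulr0, mulr1, addr0, add0r, subr_eq0) => -> -> /eqP -> /eqP ->.
    by [].
  move=> f Hf.
  set fa := f (Emat l m n 1 0 0 0); set fb := f (Emat l m n 0 1 0 0).
  set fc := f (Emat l m n 0 0 1 0); set fd := f (Emat l m n 0 0 0 1).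
  set D := l * m - n ^+ 2.
  exists (Emat l m n fd ((m * fb - n * fc) / D) ((l * fc - n * fb) / D) fa) => //.
  move=> _ [a [b [c [d ->]]]].
  rewrite EmatM Emat30 (lin_expand a b c d Hf) -/fa -/fb -/fc -/fd.
  rewrite /D; field; exact: HD.
Qed.
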